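(* Let $H_n'$ be the specialization of $H_n$ at $u_{11}=qt_0$, $u_{12}=-qt_0^{-1}$, $u_{21}=u_0$, $u_{22}=-u_0^{-1}$, $u_{31}=u_n$, $u_{32}=-u_n^{-1}$, $u_{41}=t_n$, $u_{42}=-t_n^{-1}$ (an algebra over $\mathbb C[t_0^{\pm1},t_n^{\pm1},u_0^{\pm1},u_n^{\pm1},t^{\pm1},q^{\pm1}]$). Then there is an isomorphism $\phi:H_n'\to\mathcal H_n$ given by $$\phi(U_1)=qT_0,\ \phi(U_2)=T_0^\vee,\ \phi(U_3)=ST_n^\vee S^{-1},\ \phi(U_4)=ST_nS^{-1},\ \phi(T_i)=T_i\ (1\le i\le n-1),$$ where $S=T_1T_2\cdots T_{n-1}$.
   Context: $H_n$ for $D=\widetilde D_4$: $m=4$, $d_1=\dots=d_4=2$; it is the algebra over $\mathbb C[u^{\pm1},t^{\pm1}]$ ($u=(u_{kj})$, $k=1..4$, $j=1,2$) generated by invertible $U_1,\dots,U_4,T_1,\dots,T_{n-1}$ with relations $(U_1\cdots U_4)(T_1\cdots T_{n-2}T_{n-1}^2T_{n-2}\cdots T_1)=1$; $T_iT_{i+1}T_i=T_{i+1}T_iT_{i+1}$; $[T_i,T_j]=0$ for $|i-j|>1$; $[U_j,T_i]=0$ for $i\ge2$; $[U_j,T_1U_jT_1]=0$; $[U_k,T_1^{-1}U_jT_1]=0$ for $k<j$; $(U_k-u_{k1})(U_k-u_{k2})=0$; $T_i-T_i^{-1}=t-t^{-1}$. Sahi's algebra $\mathcal H_n$ is generated over $\mathbb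 C[t_0^{\pm1},t_n^{\pm1},u_0^{\pm1},u_n^{\pm1},t^{\pm1},q^{\pm1}]$ by $T_i^{\pm1}$ ($0\le i\le n$) and $X_i^{\pm1}$ ($1\le i\le n$) with relations: $T_0T_1T_0T_1=T_1T_0T_1T_0$; $X_iX_j=X_jX_i$; $T_{n-1}T_nT_{n-1}T_n=T_nT_{n-1}T_nT_{n-1}$; $T_iT_{i+1}T_i=T_{i+1}T_iT_{i+1}$ ($1\le i\le n-2$); $[T_i,T_j]=0$ for $|i-j|>1$; $T_i-T_i^{-1}=t-t^{-1}$ ($1\le i\le n-1$); $T_0-T_0^{-1}=t_0-t_0^{-1}$; $T_n-T_n^{-1}=t_n-t_n^{-1}$; $T_iX_j=X_jT_i$ if $|i-j|>1$ or if $i=n,j=n-1$; $T_iX_i=X_{i+1}T_i^{-1}$ ($1\le i\le n-1$); $T_n^\vee-(T_n^\vee)^{-1}=u_n-u_n^{-1}$ where $T_n^\vee=X_n^{-1}T_n^{-1}$; $T_0^\vee-(T_0^\vee)^{-1}=u_0-u_0^{-1}$ where $T_0^\vee=q^{-1}T_0^{-1}X_1$. *)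

(* Defs.v *)
From HB Require Import structures.
From mathcomp Require Import all_boot all_order all_algebra.
From mathcomp Require Import complex Rstruct.
Set Implicit Arguments. Unset Strict Implicit. Unset Printing Implicit Defensive.
Import Order.TTheory GRing.Theory Num.Theory.
Local Open Scope ring_scope.

Definition C : Type := complex Rdefinitions.R.
Definition C_fieldType : fieldType := C.

(** An algebra over
      K = C[t0^{+-1}, tn^{+-1}, u0^{+-1}, un^{+-1}, t^{+-1}, q^{+-1}]
    given by generators and relations is encoded as the C-algebra with the
    six parameters adjoined as central invertible generators.  Elements of the
    presented algebra are represented by (noncommutative) terms in the
    generators; a homomorphism between presented algebras is given by the
    images of generators; and an identity between terms holds in the presented
    algebra iff it holds in every (unital associative) C-algebra A under every
    assignment of the generators satisfying the defining relations.
    ------------------------------------------------------------------ *)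

Inductive term (G : Type) : Type :=
| Gen of G
| GenInv of G
| Cst of C_fieldType
| Add of term G & term G
| Opp of term G
| Mul of term G & term G.

Fixpoint eval (G : Type) (A : unitAlgType C_fieldType) (v : G -> A) (e : term G) : A :=
  match e with
  | Gen g => v g
  | GenInv g => (v g)^-1
  | Cst c => c%:A
  | Add a b => eval v a + eval v b
  | Opp a => - eval v a
  | Mul a b => eval v a * eval v b
  end.

Inductive Par : Type := Pt0 | Ptn | Pu0 | Pun | Pt | Pq.

(** Generators of H_n' : parameters, U_1..U_4 (HpU k = U_{k+1}),
    T_1..T_{n-1} (HpT j = T_{j+1}). *)
Inductive HpGen (n : nat) : Type :=
| HpP of Par
| HpU of 'I_4
| HpT of 'I_n.-1.

(** Generators of Sahi's algebra : parameters, T_0..T_n (ShT i = T_i),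
    X_1..X_n (ShX j = X_{j+1}). *)
Inductive ShGen (n : nat) : Type :=
| ShP of Par
| ShT of 'I_n.+1
| ShX of 'I_n.

Section Relations.
Variables (n : nat) (A : unitAlgType C_fieldType).

Definition centralUnit (x : A) : Prop :=
  x \is a GRing.unit /\ forall y : A, x * y = y * x.

Definition comm (x y : A) : Prop := x * y = y * x.

Definition hpP (v : HpGen n -> A) (p : Par) : A := v (@HpP n p).
Definition hpU (v : HpGen n -> A) (k : nat) : A := v (@HpU n (inord k.-1)).
(* T_i for i = 1..n-1 (value 0 outside that range, never used) *)
Definition hpT (v : HpGen n -> A) (i : nat) : A :=
  if i is i'.+1 then oapp (fun j => v (HpT j)) 0 (insub i' : option 'I_n.-1)
  else 0.

Definition shP (v : ShGen n -> A) (p : Par) : A := v (@ShP n p).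
Definition shT (v : ShGen n -> A) (i : nat) : A :=
  oapp (fun j => v (ShT j)) 0 (insub i : option 'I_n.+1).
Definition shX (v : ShGen n -> A) (i : nat) : A :=
  if i is i'.+1 then oapp (fun j => v (ShX j)) 0 (insub i' : option 'I_n)
  else 0.

(** Defining relations of H_n' (H_n for D = D4~, specialized at
    u11 = q t0, u12 = -q t0^-1, u21 = u0, u22 = -u0^-1,
    u31 = un, u32 = -un^-1, u41 = tn, u42 = -tn^-1). *)
Definition HpRel (v : HpGen n -> A) : Prop :=
  let P := hpP v in let U := hpU v in let T := hpT v in
  let t := P Pt in let q := P Pq in
  let u1 k := match k with
              | 1 => q * P Pt0 | 2 => P Pu0 | 3 => P Pun | _ => P Ptn end in
  let u2 k := match k with
              | 1 => - (q * (P Pt0)^-1) | 2 => - (P Pu0)^-1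
              | 3 => - (P Pun)^-1 | _ => - (P Ptn)^-1 end in
  [/\ (forall p, centralUnit (P p)),
      (forall k, (1 <= k <= 4)%N -> U k \is a GRing.unit),
      (forall i, (1 <= i <= n.-1)%N -> T i \is a GRing.unit),
      (U 1 * U 2 * U 3 * U 4) *
        ((\prod_(i <- iota 1 (n - 2)%N) T i) * T (n - 1)%N * T (n - 1)%N *
         (\prod_(i <- rev (iota 1 (n - 2)%N)) T i)) = 1 &
   ([/\ (forall i, (1 <= i)%N -> (i + 1 <= n - 1)%N ->
         T i * T i.+1 * T i = T i.+1 * T i * T i.+1),
      (forall i j, (1 <= i <= n - 1)%N -> (1 <= j <= n - 1)%N -> (i.+1 < j)%N ->
         comm (T i) (T j)),
      (forall i j, (2 <= i <= n - 1)%N -> (1 <= j <= 4)%N -> comm (U j) (T i)),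
      (forall j, (1 <= j <= 4)%N -> comm (U j) (T 1 * U j * T 1)) &
      (forall k j, (1 <= k)%N -> (k < j)%N -> (j <= 4)%N ->
         comm (U k) ((T 1)^-1 * U j * T 1))] /\
   ((forall k, (1 <= k <= 4)%N -> (U k - u1 k) * (U k - u2 k) = 0) /\
      (forall i, (1 <= i <= n - 1)%N -> T i - (T i)^-1 = t - t^-1)))].

Definition ShRel (v : ShGen n -> A) : Prop :=
  let P := shP v in let T := shT v in let X := shX v in
  let t := P Pt in let q := P Pq in
  let t0 := P Pt0 in let tn := P Ptn in let u0 := P Pu0 in let un := P Pun in
  let Tnv := (X n)^-1 * (T n)^-1 in
  let T0v := q^-1 * (T 0)^-1 * X 1 in
  [/\ (forall p, centralUnit (P p)),
      (forall i, (i <= n)%N -> T i \is a GRing.unit),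
      (forall i, (1 <= i <= n)%N -> X i \is a GRing.unit),
      T 0 * T 1 * T 0 * T 1 = T 1 * T 0 * T 1 * T 0 &
   [/\ (forall i j, (1 <= i <= n)%N -> (1 <= j <= n)%N -> comm (X i) (X j)),
      T (n - 1)%N * T n * T (n - 1)%N * T n = T n * T (n - 1)%N * T n * T (n - 1)%N,
      (forall i, (1 <= i)%N -> (i <= n - 2)%N ->
         T i * T i.+1 * T i = T i.+1 * T i * T i.+1),
      (forall i j, (i <= n)%N -> (j <= n)%N -> (i.+1 < j)%N -> comm (T i) (T j)) &
   [/\ (forall i, (1 <= i <= n - 1)%N -> T i - (T i)^-1 = t - t^-1),
          T 0 - (T 0)^-1 = t0 - t0^-1,
          T n - (T n)^-1 = tn - tn^-1 &
   [/\   (forall i j, (i <= n)%N -> (1 <= j <= n)%N ->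
             ((i.+1 < j)%N \/ (j.+1 < i)%N \/ (i = n /\ j = (n - 1)%N)) ->
             T i * X j = X j * T i),
          (forall i, (1 <= i <= n - 1)%N -> T i * X i = X i.+1 * (T i)^-1),
          Tnv - Tnv^-1 = un - un^-1 &
          T0v - T0v^-1 = u0 - u0^-1]]]].

(** The map phi on generators, as an assignment of the generators of H_n'
    in terms of (an assignment of) the generators of Sahi's algebra. *)
Definition phi (v : ShGen n -> A) : HpGen n -> A :=
  let P := shP v in let T := shT v in let X := shX v in
  let q := P Pq in
  let S := \prod_(i <- iota 1 (n - 1)%N) T i in
  fun g => match g with
  | HpP p => P p
  | HpU k => match val k with
             | 0 => q * T 0
             | 1 => q^-1 * (T 0)^-1 * X 1                     (* U_2 |-> T_0^vee *)
             | 2 => S * ((X n)^-1 * (T n)^-1) * S^-1          (* U_3 |-> S T_n^vee S^-1 *)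
             | _ => S * T n * S^-1
             end
  | HpT j => T (val j).+1
  end.

End Relations.

(* Main.v *)
Require Import Defs.
From HB Require Import structures.
From mathcomp Require Import all_boot all_order all_algebra.
From mathcomp Require Import zify.
Import GRing.Theory.
Local Open Scope ring_scope.
Set Implicit Arguments. Unset Strict Implicit. Unset Printing Implicit Defensive.

Section Gen.
Variable R : unitRingType.
Implicit Types (a b c d x y z B C D E : R).

Lemma uM a b : a \is a GRing.unit -> b \is a GRing.unit -> a * b \is a GRing.unit.
Proof. by move=> ua ub; rewrite unitrMl. Qed.
Lemma uV a : a \is a GRing.unit -> a^-1 \is a GRing.unit.
Proof. by move=> ua; rewrite unitrV. Qed.

Lemma c2 a b a' b' : a * b = a' * b' -> forall r, a * (b * r) = a' * (b' * r).
Proof. by move=> h r; rewrite !mulrA h. Qed.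
Lemma c3 a b c a' b' c' : a * b * c = a' * b' * c' ->
  forall r, a * (b * (c * r)) = a' * (b' * (c' * r)).
Proof. by move=> h r; rewrite !mulrA h. Qed.
Lemma c4 a b c d a' b' c' d' : a * b * c * d = a' * b' * c' * d' ->
  forall r, a * (b * (c * (d * r))) = a' * (b' * (c' * (d' * r))).
Proof. by move=> h r; rewrite !mulrA h. Qed.

Lemma Vc x y : x \is a GRing.unit -> GRing.comm x y -> forall r, x^-1 * (y * r) = y * (x^-1 * r).
Proof. by move=> ux h; apply: c2; apply/commr_sym/commrV/commr_sym. Qed.
Lemma cV x y : x \is a GRing.unit -> GRing.comm x y -> forall r, y * (x^-1 * r) = x^-1 * (y * r).
Proof. by move=> ux h r; rewrite Vc. Qed.

Section BraidConseq.
Variables (B C : R).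
Hypotheses (uB : B \is a GRing.unit) (uC : C \is a GRing.unit)
  (hbr : B * C * B = C * B * C).

Lemma brI r : C^-1 * (B * (C * r)) = B * (C * (B^-1 * r)).
Proof.
apply: (mulrI uC); rewrite mulVKr //.
by rewrite -(c3 hbr) mulVKr.
Qed.
Lemma brII r : B^-1 * (C^-1 * (B * r)) = C * (B^-1 * (C^-1 * r)).
Proof.
apply: (mulrI uB); rewrite mulVKr //.
apply: (mulrI uC); rewrite mulVKr //.
by rewrite !mulrA -[C * B * C]hbr !mulrK.
Qed.
Lemma brIr r : C * (B * (C^-1 * r)) = B^-1 * (C * (B * r)).
Proof.
apply: (mulrI uB); rewrite mulVKr //.
by rewrite !mulrA hbr mulrK.
Qed.
Lemma brIIr r : B * (C * (B^-1 * r)) = C^-1 * (B * (C * r)).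
Proof. by rewrite brI. Qed.
End BraidConseq.

Lemma b3_fwd B C D : B \is a GRing.unit -> C \is a GRing.unit ->
  B * C * B = C * B * C -> GRing.comm B D ->
  D * C * D * C = C * D * C * D ->
  let E := C * D * C^-1 in E * B * E * B = B * E * B * E.
Proof.
move=> uB uC hbr hBD h4 E; rewrite /E.
have BD := c2 hBD. have BiD := Vc uB hBD.
have br := c3 hbr. have h4' := c4 h4.
rewrite -[LHS]mulr1 -[RHS]mulr1 -!mulrA.
rewrite !brI // -!BD !BiD brII //.
by rewrite br -h4'.
Qed.


Lemma brIII B C : B \is a GRing.unit -> C \is a GRing.unit -> B * C * B = C * B * C ->
  forall r, B * (C^-1 * (B^-1 * r)) = C^-1 * (B^-1 * (C * r)).
Proof.
move=> uB uC hbr r; apply: (mulrI uC); rewrite mulVKr // brIr //.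
by rewrite mulVKr.
Qed.
Lemma brAlpha B C : B \is a GRing.unit -> C \is a GRing.unit -> B * C * B = C * B * C ->
  forall r, B^-1 * (C * r) = C * (B * (C^-1 * (B^-1 * r))).
Proof.
move=> uB uC hbr r; apply: (mulrI uB); rewrite mulVKr //.
by rewrite (c3 hbr) mulVKr // mulVKr.
Qed.

Definition qb x y := x * y * x * y = y * x * y * x.

Lemma b3_rev B C D : B \is a GRing.unit -> C \is a GRing.unit ->
  B * C * B = C * B * C -> GRing.comm B D ->
  qb D C -> qb (C^-1 * D * C) B.
Proof.
move=> uB uC hbr hBD h4; rewrite /qb.
have BD := c2 hBD. have BiD := Vc uB hBD. have iBD := cV uB hBD.
have br := c3 hbr. have h4' := c4 h4.
rewrite -[LHS]mulr1 -[RHS]mulr1 -!mulrA.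
rewrite !brIr // !iBD !BD br brIII //.
by rewrite h4'.
Qed.

Lemma b3_fwd' B C D : B \is a GRing.unit -> C \is a GRing.unit ->
  B * C * B = C * B * C -> GRing.comm B D ->
  qb D C -> qb (C * D * C^-1) B.
Proof. by move=> uB uC hbr hBD h4; apply: b3_fwd. Qed.

Lemma qb_conj E T : T \is a GRing.unit -> qb E T -> qb (T * E * T^-1) T.
Proof.
move=> uT h; rewrite /qb.
rewrite -[LHS]mulr1 -[RHS]mulr1 -!mulrA !mulKr //.
by rewrite -[in RHS](c4 h) mulVKr.
Qed.
Lemma qb_conj' E T : T \is a GRing.unit -> qb E T -> qb (T^-1 * E * T) T.
Proof.
move=> uT h; rewrite /qb.
rewrite -[LHS]mulr1 -[RHS]mulr1 -!mulrA !mulVKr //.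
by rewrite (c4 h) mulKr.
Qed.

Lemma comm_conj a b y : y \is a GRing.unit -> GRing.comm a b ->
  GRing.comm (y * a * y^-1) (y * b * y^-1).
Proof.
move=> uy h; rewrite /GRing.comm -!mulrA !mulKr //.
by rewrite (c2 h).
Qed.

Lemma Rprop B C D E : B \is a GRing.unit -> C \is a GRing.unit ->
  B * C * B = C * B * C -> GRing.comm B D -> GRing.comm B E ->
  GRing.comm D (C^-1 * E * C) ->
  GRing.comm (C * D * C^-1) (B^-1 * (C * E * C^-1) * B).
Proof.
move=> uB uC hbr hBD hBE h.
have -> : B^-1 * (C * E * C^-1) * B = C * (B * (C^-1 * E * C) * B^-1) * C^-1.
  rewrite -[LHS]mulr1 -[RHS]mulr1 -!mulrA.
  by rewrite brAlpha // (Vc uB hBE) brII.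
apply: comm_conj => //.
apply: commrM; first apply: commrM.
- exact/commr_sym.
- exact: h.
- exact/commrV/commr_sym.
Qed.

Lemma invM3 a b c : a \is a GRing.unit -> b \is a GRing.unit -> c \is a GRing.unit ->
  (a * b * c)^-1 = c^-1 * b^-1 * a^-1.
Proof.
move=> ua ub uc; have uab : a * b \is a GRing.unit by apply: uM.
by rewrite invrM // invrM // mulrA.
Qed.
Lemma invM4 a b c d : a \is a GRing.unit -> b \is a GRing.unit -> c \is a GRing.unit ->
  d \is a GRing.unit -> (a * b * c * d)^-1 = d^-1 * c^-1 * b^-1 * a^-1.
Proof.
move=> ua ub uc ud; have uabc : a * b * c \is a GRing.unit by do 2?apply: uM.
by rewrite invrM // invM3 // !mulrA.
Qed.

Lemma base34 a b x : a \is a GRing.unit -> b \is a GRing.unit -> x \is a GRing.unit ->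
  GRing.comm x b -> qb a b ->
  GRing.comm ((a * x * a)^-1 * b^-1) (a^-1 * b * a).
Proof.
move=> ua ub ux hxb h4.
have gam : forall r, a^-1 * (b^-1 * (a^-1 * (b * (a * r)))) = b * (a^-1 * (b^-1 * r)).
  have e : a^-1 * b^-1 * a^-1 * b * a = b * a^-1 * b^-1.
    have uba : b * a \is a GRing.unit by apply: uM.
    apply: (mulIr uba).
    rewrite -[LHS]mulr1 -[RHS]mulr1 -!mulrA.
    by rewrite -(c4 h4) !mulKr.
  move=> r; have := c3 (e : (a^-1 * b^-1 * a^-1 * b) * a = (b * a^-1) * b^-1) r.
  by rewrite -!mulrA.
rewrite /GRing.comm invM3 //.
rewrite -[LHS]mulr1 -[RHS]mulr1 -!mulrA.
by rewrite gam mulVKr // (Vc ux hxb).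
Qed.

Lemma qbTnv a b x : a \is a GRing.unit -> b \is a GRing.unit -> x \is a GRing.unit ->
  GRing.comm x b -> qb a b -> qb x a ->
  qb ((a * x * a)^-1 * b^-1) a.
Proof.
move=> ua ub ux hxb h4 hx.
have del : forall r, a^-1 * (x^-1 * (a^-1 * (x^-1 * r))) = x^-1 * (a^-1 * (x^-1 * (a^-1 * r))).
  apply: c4; rewrite -!invM4 //; by rewrite hx.
have eps : forall r, a^-1 * (b^-1 * (a^-1 * (b^-1 * r))) = b^-1 * (a^-1 * (b^-1 * (a^-1 * r))).
  apply: c4; rewrite -!invM4 //; by rewrite h4.
rewrite /qb invM3 //.
rewrite -[LHS]mulr1 -[RHS]mulr1 -!mulrA.
have hh := Vc ux (commrV hxb).
rewrite !mulVKr // -!hh del eps mulKr //.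
Qed.

Lemma derive_comm B C Y : B \is a GRing.unit -> C \is a GRing.unit ->
  B * C * B = C * B * C -> GRing.comm B (C * (B * Y * B) * C) -> GRing.comm C Y.
Proof.
move=> uB uC hbr h.
have uBC : B * C \is a GRing.unit by apply: uM.
move: h; rewrite /GRing.comm -[LHS]mulr1 -[RHS]mulr1 -!mulrA.
rewrite (c3 hbr) [in RHS](c3 hbr) => /(mulrI uC) /(mulrI uB) h.
apply: (mulIr uBC); rewrite /= -[LHS]mulr1 -[RHS]mulr1 -!mulrA.
exact: h.
Qed.

Lemma zid (V : zmodType) (p s t u : V) : p + s - (t + u) = p - u - (t - s).
Proof. by rewrite opprD opprB !addrA addrAC [p + s - u]addrAC. Qed.
Lemma quad_eq x c : x \is a GRing.unit -> c \is a GRing.unit -> GRing.comm c x ->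
  (x - c) * (x + c^-1) = x * ((x - x^-1) - (c - c^-1)).
Proof.
move=> ux uc hcx.
rewrite mulrBl !mulrDr !mulrN mulrBr hcx !mulrV //; exact: zid.
Qed.
Lemma quad_of_diff x c : x \is a GRing.unit -> c \is a GRing.unit -> GRing.comm c x ->
  x - x^-1 = c - c^-1 -> (x - c) * (x + c^-1) = 0.
Proof. by move=> ux uc hcx h; rewrite quad_eq // h subrr mulr0. Qed.
Lemma diff_of_quad x c : x \is a GRing.unit -> c \is a GRing.unit -> GRing.comm c x ->
  (x - c) * (x + c^-1) = 0 -> x - x^-1 = c - c^-1.
Proof.
move=> ux uc hcx; rewrite quad_eq // -(mulr0 x) => /(mulrI ux) /eqP.
by rewrite subr_eq0 => /eqP.
Qed.
Lemma conj_diff S x c : S \is a GRing.unit -> x \is a GRing.unit -> c \is a GRing.unit ->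
  GRing.comm c S -> x - x^-1 = c - c^-1 ->
  S * x * S^-1 - (S * x * S^-1)^-1 = c - c^-1.
Proof.
move=> uS ux uc hcS h.
rewrite invM3 ?uV // invrK -mulrBl -mulrBr h.
have hh : GRing.comm (c - c^-1) S.
  by apply/commr_sym/commrB; [apply/commr_sym | apply/commrV/commr_sym].
by rewrite -hh mulrK.
Qed.
Lemma unit_conj S x : S \is a GRing.unit -> x \is a GRing.unit -> S * x * S^-1 \is a GRing.unit.
Proof. by move=> uS ux; do 2?apply: uM => //; apply: uV. Qed.

Lemma qb_comm x y : qb x y -> GRing.comm x (y * x * y).
Proof. by rewrite /qb /GRing.comm !mulrA. Qed.
Lemma comm_qb x y : GRing.comm x (y * x * y) -> qb x y.
Proof. by rewrite /qb /GRing.comm !mulrA. Qed.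
Lemma qb_sym x y : qb x y -> qb y x.
Proof. by rewrite /qb. Qed.

Lemma qb_scal c x y : (forall z, GRing.comm c z) -> qb x y -> qb (c * x) y.
Proof.
move=> hc h; have hcz : forall z r, z * (c * r) = c * (z * r).
  by move=> z r; rewrite !mulrA hc.
rewrite /qb -[LHS]mulr1 -[RHS]mulr1 -!mulrA.
rewrite ?(hcz x) ?(hcz y) ?(hcz x) ?(hcz y) ?(hcz x) ?(hcz y).
by rewrite (c4 h).
Qed.

Lemma comm_scal c c' a b : (forall z, GRing.comm c z) -> (forall z, GRing.comm c' z) ->
  GRing.comm a b -> GRing.comm (c * a) (c' * b).
Proof.
move=> hc hc' h; apply/commr_sym/commrM; apply/commr_sym; last first.
  by apply: commrM => //; apply/commr_sym.
by apply: hc.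
Qed.

Lemma qbT0v a s x : a \is a GRing.unit -> s \is a GRing.unit -> x \is a GRing.unit ->
  GRing.comm a (s * x * s) -> GRing.comm x (s * x * s) -> qb a s -> qb (a^-1 * x) s.
Proof.
move=> ua us ux hay hxy h4.
move: hay hxy; move Ey : (s * x * s) => y hay hxy.
have sig : forall r, x * (s * r) = s^-1 * (y * r).
  by move=> r; rewrite -Ey -!mulrA mulKr.
have tau : forall r, y * (s^-1 * r) = s * (x * r).
  by move=> r; rewrite -Ey -!mulrA mulVKr.
have kap : forall r, a^-1 * (s^-1 * (a^-1 * (s * r))) = s * (a^-1 * (s^-1 * (a^-1 * r))).
  have i4 : s^-1 * a^-1 * s^-1 * a^-1 = a^-1 * s^-1 * a^-1 * s^-1.
    by rewrite -!invM4 // h4.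
  move=> r; apply: (mulrI (uV us)).
  by rewrite [in RHS]mulKr // (c4 i4) mulKr.
rewrite /qb -[LHS]mulr1 -[RHS]mulr1 -!mulrA.
rewrite !sig !(cV ua hay) tau (c2 hxy) -kap.
done.
Qed.

Lemma comm12 a s x : a \is a GRing.unit -> s \is a GRing.unit ->
  GRing.comm a (s * x * s) -> qb a s -> GRing.comm a (s^-1 * (a^-1 * x) * s).
Proof.
move=> ua us hay h4.
have -> : s^-1 * (a^-1 * x) * s = (s * a * s)^-1 * (s * x * s).
  by rewrite invM3 // -!mulrA mulKr.
apply: commrM => //; apply: commrV; exact: qb_comm.
Qed.

Lemma comm_up2 B C Y : B * C * B = C * B * C -> GRing.comm C Y -> GRing.comm B (C * (B * Y * B) * C).
Proof.
move=> hbr hCY; rewrite /GRing.comm -[LHS]mulr1 -[RHS]mulr1 -!mulrA.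
rewrite (c3 hbr) (c2 hCY).
by rewrite [in RHS](c3 hbr).
Qed.

Lemma conj_swap a b s : s \is a GRing.unit -> GRing.comm a (s^-1 * b * s) ->
  GRing.comm b (s * a * s^-1).
Proof.
move=> us h; apply/commr_sym.
have := comm_conj us h.
by rewrite -!mulrA mulVKr // mulrV // mulr1.
Qed.
Lemma conj_diff' S x c : S \is a GRing.unit -> x \is a GRing.unit -> c \is a GRing.unit ->
  GRing.comm c S -> x - x^-1 = c - c^-1 ->
  S^-1 * x * S - (S^-1 * x * S)^-1 = c - c^-1.
Proof.
move=> uS ux uc hcS h.
have := conj_diff (uV uS) ux uc (commrV hcS) h.
by rewrite invrK.
Qed.
End Gen.

Section BraidA.
Variables (R : unitRingType) (n : nat) (T : nat -> R).
Hypothesis Tu : forall i, (0 < i < n)%N -> T i \is a GRing.unit.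
Hypothesis Tbr : forall i, (0 < i)%N -> (i.+1 < n)%N -> T i * T i.+1 * T i = T i.+1 * T i * T i.+1.
Hypothesis Tfar : forall i j, (0 < i)%N -> (i.+1 < j)%N -> (j < n)%N -> GRing.comm (T i) (T j).

Definition up k m := \prod_(i <- iota k m) T i.
Definition dn k m := \prod_(i <- rev (iota k m)) T i.

Lemma up0 k : up k 0 = 1. Proof. by rewrite /up big_nil. Qed.
Lemma upS k m : up k m.+1 = T k * up k.+1 m. Proof. by rewrite /up /= big_cons. Qed.
Lemma upSr k m : up k m.+1 = up k m * T (k + m).
Proof. by rewrite /up -addn1 iotaD big_cat /= big_seq1. Qed.
Lemma dn0 k : dn k 0 = 1. Proof. by rewrite /dn big_nil. Qed.
Lemma dnS k m : dn k m.+1 = dn k.+1 m * T k.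
Proof. by rewrite /dn /= rev_cons -cats1 big_cat /= big_seq1. Qed.
Lemma dnSr k m : dn k m.+1 = T (k + m) * dn k m.
Proof. by rewrite /dn -addn1 iotaD rev_cat big_cat /= big_seq1. Qed.

Lemma up_unit k m : (0 < k)%N -> (k + m <= n)%N -> up k m \is a GRing.unit.
Proof.
elim: m k => [|m IH] k hk hkm; first by rewrite up0 unitr1.
rewrite upS; apply: uM; first by apply: Tu; rewrite hk /=; lia.
by apply: IH; lia.
Qed.
Lemma dn_unit k m : (0 < k)%N -> (k + m <= n)%N -> dn k m \is a GRing.unit.
Proof.
elim: m k => [|m IH] k hk hkm; first by rewrite dn0 unitr1.
rewrite dnS; apply: uM; last by apply: Tu; rewrite hk /=; lia.
by apply: IH; lia.
Qed.
Lemma comm_up x k m : (forall i, (k <= i < k + m)%N -> GRing.comm x (T i)) ->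
  GRing.comm x (up k m).
Proof.
elim: m k => [|m IH] k h; first by rewrite up0; apply: commr1.
rewrite upS; apply: commrM; first by apply: h; lia.
by apply: IH => i hi; apply: h; lia.
Qed.
Lemma comm_dn x k m : (forall i, (k <= i < k + m)%N -> GRing.comm x (T i)) ->
  GRing.comm x (dn k m).
Proof.
elim: m k => [|m IH] k h; first by rewrite dn0; apply: commr1.
rewrite dnS; apply: commrM; last by apply: h; lia.
by apply: IH => i hi; apply: h; lia.
Qed.

Lemma shift i k m : (0 < k)%N -> (k < i)%N -> (i < k + m)%N -> (k + m <= n)%N ->
  T i * up k m = up k m * T i.-1.
Proof.
elim: m k => [|m IH] k hk hki him hmn; first by lia.
rewrite upS.
case: (ltnP k.+1 i) => hi.
- have hin : (i < n)%N by lia.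
  rewrite mulrA -(Tfar hk hi hin) -mulrA IH //; [by rewrite mulrA | by lia | by lia].
- have ei : i = k.+1 by lia.
  subst i; case: m IH him hmn => [|m] IH him hmn; first by lia.
  rewrite upS /= !mulrA -Tbr //; last by lia.
  rewrite -!mulrA; congr (_ * (_ * _)).
  apply: comm_up => j hj; apply: Tfar => //; lia.
Qed.

Definition V k D := up k (n - k) * D * (up k (n - k))^-1.
Definition W k U := (up 1 k)^-1 * U * up 1 k.

Lemma Vn D : V n D = D.
Proof. by rewrite /V subnn up0 invr1 mulr1 mul1r. Qed.

Lemma Vstep k D : (0 < k < n)%N -> V k D = T k * V k.+1 D * (T k)^-1.
Proof.
move=> /andP [hk hkn].
have e : (n - k = (n - k.+1).+1)%N by lia.
have uT : T k \is a GRing.unit by apply: Tu; lia.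
have uU : up k.+1 (n - k.+1) \is a GRing.unit by apply: up_unit; lia.
by rewrite /V e upS invrM // !mulrA.
Qed.

Lemma V_unit k D : (0 < k <= n)%N -> D \is a GRing.unit -> V k D \is a GRing.unit.
Proof. by move=> hk uD; apply: unit_conj => //; apply: up_unit => //; lia. Qed.

Lemma V_comm x k D : (0 < k)%N -> (forall j, (k <= j < n)%N -> GRing.comm x (T j)) ->
  GRing.comm x D -> GRing.comm x (V k D).
Proof.
move=> hk h hD.
have hu : GRing.comm x (up k (n - k)) by apply: comm_up => j hj; apply: h; lia.
apply: commrM; first exact: commrM.
by apply: commrV.
Qed.

Lemma V_shift i k D : (0 < k)%N -> (k < i)%N -> (i < n)%N -> GRing.comm (T i.-1) D ->
  GRing.comm (T i) (V k D).
Proof.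
move=> hk hki hin hD.
have uU : up k (n - k) \is a GRing.unit by apply: up_unit => //; lia.
have sh := shift hk hki (_ : (i < k + (n - k))%N) (_ : (k + (n - k) <= n)%N).
have sh1 : T i * up k (n - k) = up k (n - k) * T i.-1 by apply: sh; lia.
have sh2 : T i.-1 * (up k (n - k))^-1 = (up k (n - k))^-1 * T i.
  apply: (mulrI uU); rewrite mulrA -sh1 mulrK // mulVKr //.
rewrite /GRing.comm /V !mulrA sh1 -[up k (n - k) * T i.-1 * D]mulrA hD.
by rewrite -!mulrA sh2.
Qed.

Lemma C2aux D : qb D (T n.-1) -> (forall j, (0 < j < n.-1)%N -> GRing.comm (T j) D) ->
  forall d k, (k + d = n.-1)%N -> (0 < k)%N -> qb (V k.+1 D) (T k).
Proof.
move=> h4 hc; elim=> [|d IH] k hkd hk.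
  have -> : k.+1 = n by lia.
  by rewrite Vn; rewrite addn0 in hkd; rewrite hkd.
rewrite Vstep; last by lia.
apply: b3_fwd'.
- by apply: Tu; lia.
- by apply: Tu; lia.
- by apply: Tbr; lia.
- apply: V_comm; first by [].
  + move=> j hj; apply: Tfar; lia.
  + by apply: hc; lia.
- by apply: IH; lia.
Qed.

Lemma C2 D : (1 < n)%N -> qb D (T n.-1) -> (forall j, (0 < j < n.-1)%N -> GRing.comm (T j) D) ->
  qb (V 1 D) (T 1).
Proof.
move=> hn h4 hc; rewrite Vstep; last by lia.
apply: qb_conj; first by apply: Tu; lia.
by apply: (C2aux h4 hc (d := n.-1 - 1)); lia.
Qed.

Lemma Raux D E : (forall j, (0 < j < n.-1)%N -> GRing.comm (T j) D) ->
  (forall j, (0 < j < n.-1)%N -> GRing.comm (T j) E) ->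
  GRing.comm D ((T n.-1)^-1 * E * T n.-1) ->
  forall d k, (k + d = n.-1)%N -> (0 < k)%N ->
  GRing.comm (V k.+1 D) ((T k)^-1 * V k.+1 E * T k).
Proof.
move=> hD hE hb; elim=> [|d IH] k hkd hk.
  have -> : k.+1 = n by lia.
  by rewrite !Vn; rewrite addn0 in hkd; rewrite hkd.
have hv : (0 < k.+1 < n)%N by lia.
rewrite !(Vstep _ hv).
apply: Rprop.
- by apply: Tu; lia.
- by apply: Tu; lia.
- by apply: Tbr; lia.
- apply: V_comm; first by [].
  + move=> j hj; apply: Tfar; lia.
  + by apply: hD; lia.
- apply: V_comm; first by [].
  + move=> j hj; apply: Tfar; lia.
  + by apply: hE; lia.
- by apply: IH; lia.
Qed.

Lemma Rfinal D E : (1 < n)%N -> (forall j, (0 < j < n.-1)%N -> GRing.comm (T j) D) ->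
  (forall j, (0 < j < n.-1)%N -> GRing.comm (T j) E) ->
  GRing.comm D ((T n.-1)^-1 * E * T n.-1) ->
  GRing.comm (V 1 D) ((T 1)^-1 * V 1 E * T 1).
Proof.
move=> hn hD hE hb.
have u1 : T 1 \is a GRing.unit by apply: Tu; lia.
have h := Raux hD hE hb (d := n.-1 - 1) (k := 1) (_ : _) (_ : _).
have hv : (0 < 1 < n)%N by lia.
rewrite !(Vstep _ hv).
move: h; move: (V 2 D) (V 2 E) => a b h.
have -> : (T 1)^-1 * (T 1 * b * (T 1)^-1) * T 1 = b.
  by rewrite -!mulrA mulKr // mulVr // mulr1.
have := comm_conj u1 (h _ _).
have -> : T 1 * ((T 1)^-1 * b * T 1) * (T 1)^-1 = b.
  by rewrite -!mulrA mulVKr // mulrV // mulr1.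
by apply; lia.
Qed.

Lemma W0 U : W 0 U = U.
Proof. by rewrite /W up0 invr1 mulr1 mul1r. Qed.
Lemma Wstep k U : (k.+1 < n)%N -> W k.+1 U = (T k.+1)^-1 * W k U * T k.+1.
Proof.
move=> hk; rewrite /W upSr add1n invrM; last by apply: Tu; lia.
  by rewrite !mulrA.
by apply: up_unit; lia.
Qed.

Lemma C2'aux U : qb U (T 1) -> (forall j, (1 < j < n)%N -> GRing.comm (T j) U) ->
  forall k, (k.+1 < n)%N -> qb (W k U) (T k.+1).
Proof.
move=> h4 hc; elim=> [|k IH] hk; first by rewrite W0.
have hk' : (k.+1 < n)%N by lia.
rewrite (Wstep _ hk'); apply: b3_rev.
- by apply: Tu; lia.
- by apply: Tu; lia.
- by rewrite -Tbr //; lia.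
- rewrite /W; apply: commrM; first apply: commrM.
  + apply: commrV; apply: comm_up => j hj; apply/commr_sym/Tfar; lia.
  + by apply: hc; lia.
  + apply: comm_up => j hj; apply/commr_sym/Tfar; lia.
- by apply: IH; lia.
Qed.

Lemma C2' U : (1 < n)%N -> qb U (T 1) -> (forall j, (1 < j < n)%N -> GRing.comm (T j) U) ->
  qb (W n.-1 U) (T n.-1).
Proof.
move=> hn h4 hc.
have e : n.-1 = (n.-2).+1 by lia.
rewrite {1}e Wstep; last by lia.
rewrite -e; apply: qb_conj'; first by apply: Tu; lia.
have := C2'aux h4 hc (k := n.-2); rewrite -e; apply; lia.
Qed.

Lemma C1' U i : (1 < n)%N -> (0 < i)%N -> (i < n.-1)%N ->
  (forall j, (1 < j < n)%N -> GRing.comm (T j) U) -> GRing.comm (T i) (W n.-1 U).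
Proof.
move=> hn hi hin hc.
have uU : up 1 n.-1 \is a GRing.unit by apply: up_unit; lia.
have sh1 : T i.+1 * up 1 n.-1 = up 1 n.-1 * T i.
  by apply: (shift (k := 1)); lia.
have sh2 : T i * (up 1 n.-1)^-1 = (up 1 n.-1)^-1 * T i.+1.
  apply: (mulrI uU); rewrite mulrA -sh1 mulrK // mulVKr //.
rewrite /GRing.comm /W !mulrA sh2 -[_ * T i.+1 * U]mulrA hc; last by lia.
by rewrite -!mulrA sh1.
Qed.

End BraidA.


Section Access.
Variables (n : nat) (A : unitAlgType C_fieldType).

Lemma hpT_eq (w : HpGen n -> A) i (j : 'I_n.-1) : (0 < i)%N -> val j = i.-1 ->
  hpT w i = w (HpT j).
Proof.
case: i => // i _ /= e.
case: insubP => [k hk vk|]; last by rewrite -e ltn_ord.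
by congr (w (HpT _)); apply: val_inj; rewrite /= vk e.
Qed.

Lemma shT_eq (f : ShGen n -> A) i : (i <= n)%N -> shT f i = f (ShT (inord i)).
Proof.
move=> hi; rewrite /shT.
case: insubP => [j hj vj|]; last by rewrite /=; lia.
by congr (f (ShT _)); apply: val_inj; rewrite /= vj inordK //; lia.
Qed.

Lemma shX_eq (f : ShGen n -> A) i (j : 'I_n) : (0 < i)%N -> val j = i.-1 ->
  shX f i = f (ShX j).
Proof.
case: i => // i _ /= e.
case: insubP => [k hk vk|]; last by rewrite -e ltn_ord.
by congr (f (ShX _)); apply: val_inj; rewrite /= vk e.
Qed.

Lemma hpT_phi (v : ShGen n -> A) i : (0 < i < n)%N -> hpT (phi v) i = shT v i.
Proof.
case: i => // i /andP [_ hi] /=.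
case: insubP => [k hk vk|]; last by rewrite /=; lia.
by rewrite /= vk.
Qed.

Variable v : ShGen n -> A.
Local Notation S := (up (shT v) 1 (n - 1)).
Lemma hpU_phi1 : hpU (phi v) 1 = shP v Pq * shT v 0.
Proof. by rewrite /hpU /phi /= inordK. Qed.
Lemma hpU_phi2 : hpU (phi v) 2 = (shP v Pq)^-1 * (shT v 0)^-1 * shX v 1.
Proof. by rewrite /hpU /phi /= inordK. Qed.
Lemma hpU_phi3 : hpU (phi v) 3 = S * ((shX v n)^-1 * (shT v n)^-1) * S^-1.
Proof. by rewrite /hpU /phi /= inordK. Qed.
Lemma hpU_phi4 : hpU (phi v) 4 = S * shT v n * S^-1.
Proof. by rewrite /hpU /phi /= inordK. Qed.
End Access.


Section Psi.
Variables (n : nat) (hn : (1 < n)%N).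

Lemma hn1 : (0 < n.-1)%N. Proof. by lia. Qed.
Lemma hn0 : (0 < n)%N. Proof. by lia. Qed.
Definition oT (i : nat) : 'I_n.-1 := insubd (Ordinal hn1) i.
Definition oX (i : nat) : 'I_n := insubd (Ordinal hn0) i.
Lemma val_oT i : (i < n.-1)%N -> val (oT i) = i.
Proof. by move=> hi; rewrite val_insubd hi. Qed.
Lemma val_oX i : (i < n)%N -> val (oX i) = i.
Proof. by move=> hi; rewrite val_insubd hi. Qed.

Local Notation tm := (term (HpGen n)).
Definition tT (i : nat) : tm := Gen (HpT (oT i.-1)).
Definition tTi (i : nat) : tm := GenInv (HpT (oT i.-1)).
Definition tprod (s : seq tm) : tm := foldr (fun a b => Mul a b) (@Cst (HpGen n) 1) s.
Definition Sterm : tm := tprod (map tT (iota 1 (n - 1))).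
Definition Siterm : tm := tprod (map tTi (rev (iota 1 (n - 1)))).
Definition Uterm (j : nat) : tm := tprod (map tT (iota 1 j)).
Definition Dterm (j : nat) : tm := tprod (map tT (rev (iota 1 j))).
Definition tU (k : nat) : tm := Gen (HpU n (inord k.-1)).
Definition psiT (i : nat) : tm :=
  if i == 0%N then Mul (GenInv (HpP n Pq)) (tU 1)
  else if (i < n)%N then tT i
  else Mul (Mul Siterm (tU 4)) Sterm.
Definition psiX (j : nat) : tm := Mul (Mul (Dterm j) (Mul (tU 1) (tU 2))) (Uterm j).
Definition psi (h : ShGen n) : tm :=
  match h with
  | ShP p => Gen (HpP n p)
  | ShT i => psiT (val i)
  | ShX j => psiX (val j)
  end.

Section Eval.
Variables (A : unitAlgType C_fieldType) (w : HpGen n -> A).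
Local Notation T := (hpT w).

Lemma eval_tprod s : eval w (tprod s) = \prod_(t <- s) eval w t.
Proof.
elim: s => [|a s IH]; first by rewrite big_nil /= scale1r.
by rewrite big_cons /= IH.
Qed.
Lemma eval_tT i : (0 < i < n)%N -> eval w (tT i) = T i.
Proof. by move=> hi; rewrite /= (hpT_eq _ (j := oT i.-1)) // ?val_oT //; lia. Qed.
Lemma eval_tTi i : (0 < i < n)%N -> eval w (tTi i) = (T i)^-1.
Proof. by move=> hi; rewrite /= (hpT_eq _ (j := oT i.-1)) // ?val_oT //; lia. Qed.
Lemma eval_Uterm j : (j < n)%N -> eval w (Uterm j) = up T 1 j.
Proof.
move=> hj; rewrite eval_tprod big_map; apply: eq_big_seq => i.
by rewrite mem_iota => hi; apply: eval_tT; lia.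
Qed.
Lemma eval_Dterm j : (j < n)%N -> eval w (Dterm j) = dn T 1 j.
Proof.
move=> hj; rewrite eval_tprod big_map; apply: eq_big_seq => i.
by rewrite mem_rev mem_iota => hi; apply: eval_tT; lia.
Qed.
Lemma eval_Sterm : eval w Sterm = up T 1 (n - 1).
Proof. by apply: eval_Uterm; lia. Qed.

Lemma prod_rev_inv (s : seq nat) (F : nat -> A) : (forall i, i \in s -> F i \is a GRing.unit) ->
  \prod_(i <- rev s) (F i)^-1 = (\prod_(i <- s) F i)^-1.
Proof.
elim: s => [|a s IH] h; first by rewrite !big_nil invr1.
rewrite rev_cons -cats1 big_cat big_seq1 big_cons IH; last by move=> i hi; apply: h; rewrite inE hi orbT.
rewrite invrM //; first by apply: h; rewrite inE eqxx.
elim: s {IH} h => [|b s IH] h; first by rewrite big_nil unitr1.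
rewrite big_cons; apply: uM; first by apply: h; rewrite !inE eqxx orbT.
by apply: IH => i hi; apply: h; rewrite !inE in hi *; case/orP: hi => [->|->]; rewrite ?orbT.
Qed.

Lemma eval_Siterm : (forall i, (0 < i < n)%N -> T i \is a GRing.unit) ->
  eval w Siterm = (up T 1 (n - 1))^-1.
Proof.
move=> hu; rewrite eval_tprod big_map.
rewrite (eq_big_seq (fun i => (T i)^-1)); last first.
  by move=> i; rewrite mem_rev mem_iota => hi; apply: eval_tTi; lia.
by rewrite prod_rev_inv // => i; rewrite mem_iota => hi; apply: hu; lia.
Qed.
End Eval.
End Psi.

Module P1.

Section Part1.
Variables (n : nat) (hn : (1 < n)%N) (A : unitAlgType C_fieldType) (v : ShGen n -> A).
Hypothesis H : ShRel v.
Local Notation T := (shT v).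
Local Notation X := (shX v).
Local Notation P := (shP v).

Ltac destrH := move: H; rewrite /ShRel; case=> h0 h1 h2 h3 [h4 h5 h6 h7 [h8 h9 h10 [h11 h12 h13 h14]]].
Lemma cP p : centralUnit (P p). Proof. by destrH; apply: h0. Qed.
Lemma uP p : P p \is a GRing.unit. Proof. exact: (proj1 (cP p)). Qed.
Lemma zP p y : GRing.comm (P p) y. Proof. exact: (proj2 (cP p) y). Qed.
Lemma zPV p y : GRing.comm (P p)^-1 y.
Proof. by apply/commr_sym/commrV/commr_sym/zP. Qed.
Lemma Tu i : (i <= n)%N -> T i \is a GRing.unit. Proof. by destrH; apply: h1. Qed.
Lemma Xu i : (0 < i <= n)%N -> X i \is a GRing.unit. Proof. by destrH; apply: h2. Qed.
Lemma h01 : T 0 * T 1 * T 0 * T 1 = T 1 * T 0 * T 1 * T 0. Proof. by destrH. Qed.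
Lemma XX i j : (1 <= i <= n)%N -> (1 <= j <= n)%N -> GRing.comm (X i) (X j).
Proof. by destrH; apply: h4. Qed.
Lemma h4n : T (n - 1) * T n * T (n - 1) * T n = T n * T (n - 1) * T n * T (n - 1).
Proof. by destrH. Qed.
Lemma hbr i : (1 <= i)%N -> (i <= n - 2)%N -> T i * T i.+1 * T i = T i.+1 * T i * T i.+1.
Proof. by destrH; apply: h6. Qed.
Lemma hfar i j : (i <= n)%N -> (j <= n)%N -> (i.+1 < j)%N -> GRing.comm (T i) (T j).
Proof. by destrH; apply: h7. Qed.
Lemma hquad i : (1 <= i <= n - 1)%N -> T i - (T i)^-1 = P Pt - (P Pt)^-1.
Proof. by destrH; apply: h8. Qed.
Lemma hq0 : T 0 - (T 0)^-1 = P Pt0 - (P Pt0)^-1.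
Proof. by destrH. Qed.
Lemma hqn : T n - (T n)^-1 = P Ptn - (P Ptn)^-1.
Proof. by destrH. Qed.
Lemma hTX i j : (i <= n)%N -> (1 <= j <= n)%N ->
  (i.+1 < j)%N \/ (j.+1 < i)%N \/ (i = n /\ j = (n - 1)%N) -> GRing.comm (T i) (X j).
Proof. by destrH; apply: h11. Qed.
Lemma hTXi i : (1 <= i <= n - 1)%N -> T i * X i = X i.+1 * (T i)^-1.
Proof. by destrH; apply: h12. Qed.
Lemma hTnv : (X n)^-1 * (T n)^-1 - ((X n)^-1 * (T n)^-1)^-1 = P Pun - (P Pun)^-1.
Proof. by destrH. Qed.
Lemma hT0v : (P Pq)^-1 * (T 0)^-1 * X 1 - ((P Pq)^-1 * (T 0)^-1 * X 1)^-1 = P Pu0 - (P Pu0)^-1.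
Proof. by destrH. Qed.


Lemma Tu' i : (0 < i < n)%N -> T i \is a GRing.unit.
Proof. by move=> h; apply: Tu; lia. Qed.
Lemma Tbr' i : (0 < i)%N -> (i.+1 < n)%N -> T i * T i.+1 * T i = T i.+1 * T i * T i.+1.
Proof. by move=> h1 h2; apply: hbr; lia. Qed.
Lemma Tfar' i j : (0 < i)%N -> (i.+1 < j)%N -> (j < n)%N -> GRing.comm (T i) (T j).
Proof. by move=> h1 h2 h3; apply: hfar; lia. Qed.

Lemma Xrec i : (0 < i < n)%N -> X i.+1 = T i * X i * T i.
Proof.
move=> hi; have uT : T i \is a GRing.unit by apply: Tu; lia.
by rewrite hTXi ?mulrVK //; lia.
Qed.

Lemma X1T i : (1 < i < n)%N -> GRing.comm (T i) (X 1).
Proof.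
move=> /andP [h1 h2].
case: (ltnP 2 i) => hi.
  by apply: hTX; [lia | lia | right; left; lia].
have -> : i = 2 by lia.
apply: (derive_comm (B := T 1)); [by apply: Tu; lia | by apply: Tu; lia | by apply: hbr; lia |].
rewrite -Xrec; last by lia.
rewrite -Xrec; last by lia.
by apply: hTX; [lia | lia | left; lia].
Qed.

Lemma Xform k : (k < n)%N -> X k.+1 = dn T 1 k * X 1 * up T 1 k.
Proof.
elim: k => [|k IH] hk; first by rewrite dn0 up0 mul1r mulr1.
rewrite Xrec; last by lia.
by rewrite IH; [rewrite dnSr upSr add1n !mulrA | lia].
Qed.

Local Notation S := (up T 1 (n - 1)).
Local Notation S' := (dn T 1 (n - 1)).
Lemma Xn : X n = S' * X 1 * S.
Proof. by rewrite -Xform; [congr X; lia | lia]. Qed.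
Lemma uS : S \is a GRing.unit.
Proof. by apply: (up_unit Tu'); lia. Qed.
Lemma uS' : S' \is a GRing.unit.
Proof. by apply: (dn_unit Tu'); lia. Qed.

Local Notation D3 := ((X n)^-1 * (T n)^-1).
Local Notation D4 := (T n).
Lemma uD3 : D3 \is a GRing.unit.
Proof. by apply: uM; apply: uV; [apply: Xu | apply: Tu]; lia. Qed.
Lemma uD4 : D4 \is a GRing.unit.
Proof. by apply: Tu. Qed.
Lemma cD3 j : (0 < j < n.-1)%N -> GRing.comm (T j) D3.
Proof.
move=> hj; apply: commrM; apply: commrV; first by apply: hTX; [lia|lia|left; lia].
by apply: hfar; lia.
Qed.
Lemma cD4 j : (0 < j < n.-1)%N -> GRing.comm (T j) D4.
Proof. by move=> hj; apply: hfar; lia. Qed.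
Lemma T0D3 : GRing.comm (T 0) D3.
Proof.
apply: commrM; apply: commrV; first by apply: hTX; [lia|lia|left; lia].
by apply: hfar; lia.
Qed.
Lemma T0D4 : GRing.comm (T 0) D4.
Proof. by apply: hfar; lia. Qed.
Lemma X1D3 : GRing.comm (X 1) D3.
Proof.
apply: commrM; apply: commrV; first by apply: XX; lia.
apply/commr_sym; apply: hTX; [lia | lia |].
by case: (ltnP 2 n) => h; [right; left | right; right; split]; lia.
Qed.
Lemma X1D4 : GRing.comm (X 1) D4.
Proof.
apply/commr_sym; apply: hTX; [lia | lia |].
by case: (ltnP 2 n) => h; [right; left | right; right; split]; lia.
Qed.
Lemma Xnrec : X n = T (n - 1) * X (n - 1) * T (n - 1).
Proof. by rewrite -Xrec; [congr X; lia | lia]. Qed.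
Lemma qbD4 : qb D4 (T n.-1).
Proof. by rewrite -subn1; apply: qb_sym; exact: h4n. Qed.
Lemma qbD3 : qb D3 (T n.-1).
Proof.
rewrite Xnrec -subn1; apply: qbTnv.
- by apply: Tu; lia.
- by apply: Tu.
- by apply: Xu; lia.
- by apply/commr_sym; apply: hTX; [lia | lia | right; right; split].
- exact: h4n.
- apply: comm_qb; rewrite -Xnrec; apply: XX; lia.
Qed.
Lemma base3 : GRing.comm D3 ((T n.-1)^-1 * D4 * T n.-1).
Proof.
rewrite Xnrec -subn1; apply: base34.
- by apply: Tu; lia.
- by apply: Tu.
- by apply: Xu; lia.
- by apply/commr_sym; apply: hTX; [lia | lia | right; right; split].
- exact: h4n.
Qed.

Lemma conjV1 D : (T 1)^-1 * V n T 1 D * T 1 = V n T 2 D.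
Proof.
have u1 : T 1 \is a GRing.unit by apply: Tu; lia.
rewrite (Vstep Tu'); last by lia.
by move: (V n T 2 D) => Z; rewrite -!mulrA mulKr // mulVr // mulr1.
Qed.
Lemma V1E D : V n T 1 D = S * D * S^-1.
Proof. by []. Qed.

Lemma cV2 x D : (forall j, (1 < j < n)%N -> GRing.comm x (T j)) -> GRing.comm x D ->
  GRing.comm x (V n T 2 D).
Proof. by move=> h hD; apply: V_comm => // j hj; apply: h; lia. Qed.

Local Notation U := (hpU (phi v)).
Local Notation Th := (hpT (phi v)).
Local Notation q := (P Pq).

Lemma Th_eq i : (0 < i < n)%N -> Th i = T i.
Proof. exact: hpT_phi. Qed.

Lemma p1_a : forall p, centralUnit (hpP (phi v) p).
Proof. exact: cP. Qed.

Lemma uU1 : U 1 \is a GRing.unit.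
Proof. by rewrite hpU_phi1; apply: uM; [apply: uP | apply: Tu]. Qed.
Lemma uU2 : U 2 \is a GRing.unit.
Proof.
by rewrite hpU_phi2; apply: uM; [apply: uM; apply: uV; [apply: uP | apply: Tu] | apply: Xu; lia].
Qed.
Lemma uU3 : U 3 \is a GRing.unit.
Proof. by rewrite hpU_phi3; apply: unit_conj; [exact: uS | exact: uD3]. Qed.
Lemma uU4 : U 4 \is a GRing.unit.
Proof. by rewrite hpU_phi4; apply: unit_conj; [exact: uS | exact: uD4]. Qed.

Lemma p1_b : forall k, (1 <= k <= 4)%N -> U k \is a GRing.unit.
Proof.
case=> [|[|[|[|[|k]]]]] //= _; [exact: uU1 | exact: uU2 | exact: uU3 | exact: uU4].
Qed.

Lemma p1_c : forall i, (1 <= i <= n.-1)%N -> Th i \is a GRing.unit.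
Proof. by move=> i hi; rewrite Th_eq; [apply: Tu | ]; lia. Qed.

Lemma prodT : \prod_(i <- iota 1 (n - 2)) Th i = up T 1 (n - 2).
Proof.
by apply: eq_big_seq => i; rewrite mem_iota => hi; apply: Th_eq; lia.
Qed.
Lemma prodTr : \prod_(i <- rev (iota 1 (n - 2))) Th i = dn T 1 (n - 2).
Proof.
by apply: eq_big_seq => i; rewrite mem_rev mem_iota => hi; apply: Th_eq; lia.
Qed.

Lemma U12 : U 1 * U 2 = X 1.
Proof.
rewrite hpU_phi1 hpU_phi2.
have uq := uP Pq; have u0 : T 0 \is a GRing.unit by apply: Tu.
by rewrite -!mulrA -(c2 (zPV Pq (T 0))) !mulVKr.
Qed.

Lemma p1_d : (U 1 * U 2 * U 3 * U 4) *
   ((\prod_(i <- iota 1 (n - 2)) Th i) * Th (n - 1)%N * Th (n - 1)%N *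
    (\prod_(i <- rev (iota 1 (n - 2))) Th i)) = 1.
Proof.
rewrite U12 hpU_phi3 hpU_phi4 prodT prodTr Th_eq; last by lia.
have e1 : up T 1 (n - 2) * T (n - 1) = S.
  have -> : (n - 1 = (n - 2).+1)%N by lia.
  by rewrite upSr; congr (_ * T _); lia.
have e2 : T (n - 1) * dn T 1 (n - 2) = S'.
  have -> : (n - 1 = (n - 2).+1)%N by lia.
  by rewrite dnSr; congr (T _ * _); lia.
have un : T n \is a GRing.unit by apply: Tu.
have u1 : X 1 \is a GRing.unit by apply: Xu; lia.
have uS := uS; have uS' := uS'.
rewrite -(mulrA _ (T (n - 1))) e2 e1 Xn invM3 //.
by rewrite -[LHS]mulr1 -!mulrA !mulKr // !mulVKr.
Qed.

Lemma p1_e1 : forall i, (1 <= i)%N -> (i + 1 <= n - 1)%N ->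
  Th i * Th i.+1 * Th i = Th i.+1 * Th i * Th i.+1.
Proof. by move=> i h1 h2; rewrite !Th_eq; [apply: hbr | ..]; lia. Qed.

Lemma p1_e2 : forall i j, (1 <= i <= n - 1)%N -> (1 <= j <= n - 1)%N -> (i.+1 < j)%N ->
  GRing.comm (Th i) (Th j).
Proof. by move=> i j h1 h2 h3; rewrite !Th_eq; [apply: hfar | ..]; lia. Qed.

Lemma p1_e3 : forall i j, (2 <= i <= n - 1)%N -> (1 <= j <= 4)%N -> GRing.comm (U j) (Th i).
Proof.
move=> i j hi hj; rewrite Th_eq; last by lia.
apply/commr_sym.
case: j hj => [|[|[|[|[|j]]]]] //= _.
- rewrite hpU_phi1; apply: commrM; [apply/commr_sym/zP | apply/commr_sym; apply: hfar; lia].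
- rewrite hpU_phi2; apply: commrM; last by apply: X1T; lia.
  apply: commrM; [apply/commr_sym/zPV | apply: commrV; apply/commr_sym; apply: hfar; lia].
- rewrite hpU_phi3 -V1E; apply: (V_shift Tu' Tbr' Tfar'); try lia.
  by apply: cD3; lia.
- rewrite hpU_phi4 -V1E; apply: (V_shift Tu' Tbr' Tfar'); try lia.
  by apply: cD4; lia.
Qed.

Lemma p1_e4 : forall j, (1 <= j <= 4)%N -> GRing.comm (U j) (Th 1 * U j * Th 1).
Proof.
move=> j hj; rewrite Th_eq; last by lia.
have u0 : T 0 \is a GRing.unit by apply: Tu.
have u1 : T 1 \is a GRing.unit by apply: Tu; lia.
have uX : X 1 \is a GRing.unit by apply: Xu; lia.
case: j hj => [|[|[|[|[|j]]]]] //= _.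
- rewrite hpU_phi1; apply: qb_comm; apply: qb_scal; first exact: zP.
  exact: h01.
- rewrite hpU_phi2 -mulrA; apply: qb_comm; apply: qb_scal; first exact: zPV.
  apply: qbT0v => //.
  + rewrite -Xrec; last by lia.
    by apply: hTX; [lia | lia | left].
  + by rewrite -Xrec; [apply: XX | ]; lia.
  + exact: h01.
- rewrite hpU_phi3 -V1E; apply: qb_comm; apply: (C2 Tu' Tbr' Tfar') => //.
  + exact: qbD3.
  + exact: cD3.
- rewrite hpU_phi4 -V1E; apply: qb_comm; apply: (C2 Tu' Tbr' Tfar') => //.
  + exact: qbD4.
  + exact: cD4.
Qed.

Lemma cV2T0 D : GRing.comm (T 0) D -> GRing.comm (T 0) (V n T 2 D).
Proof. by move=> h; apply: cV2 => // j hj; apply: hfar; lia. Qed.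
Lemma cV2X1 D : GRing.comm (X 1) D -> GRing.comm (X 1) (V n T 2 D).
Proof. by move=> h; apply: cV2 => // j hj; apply/commr_sym/X1T; lia. Qed.

Lemma p1_e5 : forall k j, (1 <= k)%N -> (k < j)%N -> (j <= 4)%N ->
  GRing.comm (U k) ((Th 1)^-1 * U j * Th 1).
Proof.
move=> k j hk hkj hj; rewrite Th_eq; last by lia.
have u0 : T 0 \is a GRing.unit by apply: Tu.
have u1 : T 1 \is a GRing.unit by apply: Tu; lia.
have uX : X 1 \is a GRing.unit by apply: Xu; lia.
have c1 : forall Z, GRing.comm (T 0) Z -> GRing.comm (U 1) Z.
  move=> Z h; rewrite hpU_phi1; apply/commr_sym/commrM; apply/commr_sym => //.
  exact: zP.
have c2' : forall Z, GRing.comm (T 0) Z -> GRing.comm (X 1) Z -> GRing.comm (U 2) Z.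
  move=> Z h h'; rewrite hpU_phi2; apply/commr_sym/commrM; apply/commr_sym => //.
  apply/commr_sym/commrM; apply/commr_sym; first exact: zPV.
  by apply/commr_sym/commrV/commr_sym.
case: k hk hkj => [|[|[|[|k]]]] //= _; case: j hj => [|[|[|[|[|j]]]]] //= _ _.
- rewrite hpU_phi1 hpU_phi2.
  have -> : (T 1)^-1 * ((P Pq)^-1 * (T 0)^-1 * X 1) * T 1
            = (P Pq)^-1 * ((T 1)^-1 * ((T 0)^-1 * X 1) * T 1).
    by rewrite -!mulrA -(c2 (zPV Pq (T 1)^-1)).
  apply: comm_scal; [exact: zP | exact: zPV |].
  apply: comm12 => //; last exact: h01.
  rewrite -Xrec; last by lia.
  by apply: hTX; [lia | lia | left].
- by rewrite hpU_phi3 -V1E conjV1; apply: c1; apply: cV2T0; exact: T0D3.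
- by rewrite hpU_phi4 -V1E conjV1; apply: c1; apply: cV2T0; exact: T0D4.
- rewrite hpU_phi3 -V1E conjV1; apply: c2'; [apply: cV2T0; exact: T0D3 | apply: cV2X1; exact: X1D3].
- rewrite hpU_phi4 -V1E conjV1; apply: c2'; [apply: cV2T0; exact: T0D4 | apply: cV2X1; exact: X1D4].
- rewrite hpU_phi3 hpU_phi4 -!V1E; apply: (Rfinal Tu' Tbr' Tfar') => //.
  + exact: cD3.
  + exact: cD4.
  + exact: base3.
Qed.

Lemma p1_f1 : (U 1 - P Pq * P Pt0) * (U 1 - - (P Pq * (P Pt0)^-1)) = 0.
Proof.
rewrite hpU_phi1 opprK -mulrBr -mulrDr -mulrA -(c2 (zP Pq _)).
have u0 : T 0 \is a GRing.unit by apply: Tu.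
by rewrite (quad_of_diff u0 (uP _) (zP _ _) hq0) !mulr0.
Qed.
Lemma p1_f2 : (U 2 - P Pu0) * (U 2 - - (P Pu0)^-1) = 0.
Proof. by rewrite opprK; apply: quad_of_diff; [exact: uU2 | exact: uP | exact: zP | rewrite hpU_phi2; exact: hT0v]. Qed.
Lemma p1_f3 : (U 3 - P Pun) * (U 3 - - (P Pun)^-1) = 0.
Proof.
rewrite opprK; apply: quad_of_diff; [exact: uU3 | exact: uP | exact: zP |].
rewrite hpU_phi3; apply: conj_diff; [exact: uS | exact: uD3 | exact: uP | exact: zP | exact: hTnv].
Qed.
Lemma p1_f4 : (U 4 - P Ptn) * (U 4 - - (P Ptn)^-1) = 0.
Proof.
rewrite opprK; apply: quad_of_diff; [exact: uU4 | exact: uP | exact: zP |].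
rewrite hpU_phi4; apply: conj_diff; [exact: uS | exact: uD4 | exact: uP | exact: zP | exact: hqn].
Qed.
Lemma p1_f5 : forall i, (1 <= i <= n - 1)%N -> Th i - (Th i)^-1 = P Pt - (P Pt)^-1.
Proof. by move=> i hi; rewrite Th_eq; [exact: hquad | lia]. Qed.

Lemma part1 : HpRel (phi v).
Proof.
rewrite /HpRel; cbv beta zeta; split.
- exact: p1_a.
- exact: p1_b.
- exact: p1_c.
- exact: p1_d.
split; first split.
- exact: p1_e1.
- exact: p1_e2.
- exact: p1_e3.
- exact: p1_e4.
- exact: p1_e5.
split.
- case=> [|[|[|[|[|k]]]]] //= _; [exact: p1_f1 | exact: p1_f2 | exact: p1_f3 | exact: p1_f4].
- exact: p1_f5.
Qed.
End Part1.

End P1.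

Module P3.

Section Part2.
Variables (n : nat) (hn : (1 < n)%N) (A : unitAlgType C_fieldType) (w : HpGen n -> A).
Hypothesis Hw : HpRel w.
Local Notation T := (hpT w).
Local Notation U := (hpU w).
Local Notation P := (hpP w).
Local Notation q := (hpP w Pq).

Ltac destrH := move: Hw; rewrite /HpRel; case=> h0 h1 h2 h3 [[h4 h5 h6 h7 h8] [h9 h10]].
Lemma cP p : centralUnit (P p). Proof. by destrH; apply: h0. Qed.
Lemma uP p : P p \is a GRing.unit. Proof. exact: (proj1 (cP p)). Qed.
Lemma zP p y : GRing.comm (P p) y. Proof. exact: (proj2 (cP p) y). Qed.
Lemma zPV p y : GRing.comm (P p)^-1 y.
Proof. by apply/commr_sym/commrV/commr_sym/zP. Qed.
Lemma Uu k : (1 <= k <= 4)%N -> U k \is a GRing.unit. Proof. by destrH; apply: h1. Qed.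
Lemma Tu i : (1 <= i <= n.-1)%N -> T i \is a GRing.unit. Proof. by destrH; apply: h2. Qed.
Lemma hprod : (U 1 * U 2 * U 3 * U 4) *
   ((\prod_(i <- iota 1 (n - 2)) T i) * T (n - 1)%N * T (n - 1)%N *
    (\prod_(i <- rev (iota 1 (n - 2))) T i)) = 1.
Proof. by destrH. Qed.
Lemma hbr i : (1 <= i)%N -> (i + 1 <= n - 1)%N -> T i * T i.+1 * T i = T i.+1 * T i * T i.+1.
Proof. by destrH; apply: h4. Qed.
Lemma hfar i j : (1 <= i <= n - 1)%N -> (1 <= j <= n - 1)%N -> (i.+1 < j)%N -> GRing.comm (T i) (T j).
Proof. by destrH; apply: h5. Qed.
Lemma hUT i j : (2 <= i <= n - 1)%N -> (1 <= j <= 4)%N -> GRing.comm (U j) (T i).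
Proof. by destrH; apply: h6. Qed.
Lemma hqb j : (1 <= j <= 4)%N -> GRing.comm (U j) (T 1 * U j * T 1).
Proof. by destrH; apply: h7. Qed.
Lemma hUU k j : (1 <= k)%N -> (k < j)%N -> (j <= 4)%N -> GRing.comm (U k) ((T 1)^-1 * U j * T 1).
Proof. by destrH; apply: h8. Qed.
Lemma hq1 : (U 1 - q * P Pt0) * (U 1 - - (q * (P Pt0)^-1)) = 0.
Proof. by destrH; apply: (h9 1). Qed.
Lemma hq2 : (U 2 - P Pu0) * (U 2 - - (P Pu0)^-1) = 0.
Proof. by destrH; apply: (h9 2). Qed.
Lemma hq3 : (U 3 - P Pun) * (U 3 - - (P Pun)^-1) = 0.
Proof. by destrH; apply: (h9 3). Qed.
Lemma hq4 : (U 4 - P Ptn) * (U 4 - - (P Ptn)^-1) = 0.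
Proof. by destrH; apply: (h9 4). Qed.
Lemma hTq i : (1 <= i <= n - 1)%N -> T i - (T i)^-1 = P Pt - (P Pt)^-1.
Proof. by destrH; apply: h10. Qed.


Lemma Tu' i : (0 < i < n)%N -> T i \is a GRing.unit.
Proof. by move=> h; apply: Tu; lia. Qed.
Lemma Tbr' i : (0 < i)%N -> (i.+1 < n)%N -> T i * T i.+1 * T i = T i.+1 * T i * T i.+1.
Proof. by move=> h1 h2; apply: hbr; lia. Qed.
Lemma Tfar' i j : (0 < i)%N -> (i.+1 < j)%N -> (j < n)%N -> GRing.comm (T i) (T j).
Proof. by move=> h1 h2 h3; apply: hfar; lia. Qed.
Lemma uU1 : U 1 \is a GRing.unit. Proof. exact: Uu. Qed.
Lemma uU2 : U 2 \is a GRing.unit. Proof. exact: Uu. Qed.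
Lemma uU3 : U 3 \is a GRing.unit. Proof. exact: Uu. Qed.
Lemma uU4 : U 4 \is a GRing.unit. Proof. exact: Uu. Qed.
Lemma uT1 : T 1 \is a GRing.unit. Proof. by apply: Tu'; lia. Qed.

Local Notation S := (up T 1 (n - 1)).
Local Notation S' := (dn T 1 (n - 1)).
Lemma uS : S \is a GRing.unit. Proof. by apply: (up_unit Tu'); lia. Qed.
Lemma uS' : S' \is a GRing.unit. Proof. by apply: (dn_unit Tu'); lia. Qed.

Local Notation X1 := (U 1 * U 2).
Definition Xp j := dn T 1 j.-1 * X1 * up T 1 j.-1.
Definition T0p := q^-1 * U 1.
Definition Tnp := S^-1 * U 4 * S.

Lemma uX1 : X1 \is a GRing.unit. Proof. exact: uM uU1 uU2. Qed.
Lemma Xp1 : Xp 1 = X1. Proof. by rewrite /Xp dn0 up0 mul1r mulr1. Qed.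
Lemma Xp_rec i : (0 < i < n)%N -> Xp i.+1 = T i * Xp i * T i.
Proof.
move=> hi; rewrite /Xp /=.
have e : i = (i.-1).+1 by lia.
have ed : dn T 1 i = T i * dn T 1 i.-1 by rewrite {1}e dnSr add1n -e.
have eu : up T 1 i = up T 1 i.-1 * T i by rewrite {1}e upSr add1n -e.
by rewrite ed eu !mulrA.
Qed.
Lemma Xp_n : Xp n = S' * X1 * S.
Proof. by rewrite /Xp subn1. Qed.
Lemma uXp j : (0 < j <= n)%N -> Xp j \is a GRing.unit.
Proof.
move=> hj; apply: uM; first apply: uM.
- by apply: (dn_unit Tu'); lia.
- exact: uX1.
- by apply: (up_unit Tu'); lia.
Qed.
Lemma uT0p : T0p \is a GRing.unit. Proof. exact: uM (uV (uP _)) uU1. Qed.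
Lemma uTnp : Tnp \is a GRing.unit.
Proof. by apply: uM; [apply: uM; [exact: uV uS | exact: uU4] | exact: uS]. Qed.

Lemma prodT2 : (\prod_(i <- iota 1 (n - 2)) T i) * T (n - 1) * T (n - 1) *
    (\prod_(i <- rev (iota 1 (n - 2))) T i) = S * S'.
Proof.
have e1 : up T 1 (n - 2) * T (n - 1) = S.
  have -> : (n - 1 = (n - 2).+1)%N by lia.
  by rewrite upSr; congr (_ * T _); lia.
have e2 : T (n - 1) * dn T 1 (n - 2) = S'.
  have -> : (n - 1 = (n - 2).+1)%N by lia.
  by rewrite dnSr; congr (T _ * _); lia.
by rewrite -/(up T 1 (n - 2)) -/(dn T 1 (n - 2)) -(mulrA _ (T (n - 1))) e2 e1.
Qed.

Lemma U3form : (Xp n)^-1 * Tnp^-1 = S^-1 * U 3 * S.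
Proof.
have uS := uS; have uS' := uS'; have u4 := uU4; have uX := uX1; have u3 := uU3.
have hp := hprod; rewrite prodT2 in hp.
have e : U 3 = X1^-1 * (X1 * U 3 * U 4 * (S * S')) * S'^-1 * S^-1 * (U 4)^-1.
  move: X1 uX => Y uY.
  by rewrite -!mulrA mulKr // !mulVKr // mulrV // mulr1.
rewrite e hp mulr1.
rewrite Xp_n /Tnp invM3 // invM3 ?uV // invrK.
by rewrite -!mulrA.
Qed.

Lemma Wsplit : Tnp = (up T 2 (n - 2))^-1 * ((T 1)^-1 * U 4 * T 1) * up T 2 (n - 2).
Proof.
have e : (n - 1 = (n - 2).+1)%N by lia.
rewrite /Tnp e upS invrM; [by rewrite !mulrA | exact: uT1 | by apply: (up_unit Tu'); lia].
Qed.
Lemma commW x : (forall j, (1 < j < n)%N -> GRing.comm x (T j)) ->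
  GRing.comm x ((T 1)^-1 * U 4 * T 1) -> GRing.comm x Tnp.
Proof.
move=> h h4; rewrite Wsplit.
have hu : GRing.comm x (up T 2 (n - 2)) by apply: comm_up => j hj; apply: h; lia.
apply: commrM => //; apply: commrM => //.
by apply: commrV.
Qed.
Lemma TnpW : Tnp = W T n.-1 (U 4).
Proof. by rewrite /Tnp /W subn1. Qed.

Lemma U1T j : (1 < j < n)%N -> GRing.comm (U 1) (T j).
Proof. by move=> hj; apply: hUT; lia. Qed.
Lemma U2T j : (1 < j < n)%N -> GRing.comm (U 2) (T j).
Proof. by move=> hj; apply: hUT; lia. Qed.
Lemma X1T j : (1 < j < n)%N -> GRing.comm X1 (T j).
Proof. by move=> hj; apply/commr_sym/commrM; apply/commr_sym; [apply: U1T | apply: U2T]. Qed.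
Lemma up1 k : up T k 1 = T k. Proof. by rewrite upS up0 mulr1. Qed.
Lemma dn1 k : dn T k 1 = T k. Proof. by rewrite dnS dn0 mul1r. Qed.
Lemma Xp2 : Xp 2 = T 1 * X1 * T 1. Proof. by rewrite /Xp /= up1 dn1. Qed.

Lemma commM2 (x a b : A) : GRing.comm a x -> GRing.comm b x -> GRing.comm (a * b) x.
Proof. by move=> ha hb; apply/commr_sym/commrM; apply/commr_sym. Qed.

Lemma U1Xp2 : GRing.comm (U 1) (Xp 2).
Proof.
have u1 := uT1.
have -> : Xp 2 = (T 1 * U 1 * T 1) * ((T 1)^-1 * U 2 * T 1).
  by rewrite Xp2 -!mulrA mulVKr.
by apply: commrM; [apply: hqb | apply: hUU].
Qed.
Lemma X1Xp2 : GRing.comm X1 (Xp 2).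
Proof.
have u1 := uT1.
apply: commM2; first exact: U1Xp2.
have -> : Xp 2 = (T 1 * U 1 * (T 1)^-1) * (T 1 * U 2 * T 1).
  by rewrite Xp2 -!mulrA mulKr.
apply: commrM; last by apply: hqb.
by apply: conj_swap => //; apply: hUU.
Qed.

Lemma TXA i j : (1 <= j)%N -> (j < i)%N -> (i < n)%N -> GRing.comm (T i) (Xp j).
Proof.
move=> hj hji hi; rewrite /Xp; apply: commrM; first apply: commrM.
- apply: comm_dn => k hk; apply/commr_sym/Tfar'; lia.
- by apply/commr_sym/X1T; lia.
- apply: comm_up => k hk; apply/commr_sym/Tfar'; lia.
Qed.
Lemma TXB j i : (0 < i)%N -> (i.+1 < j)%N -> (j <= n)%N -> GRing.comm (T i) (Xp j).
Proof.
elim: j i => [|j IH] i hi hij hjn; first by lia.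
rewrite Xp_rec; last by lia.
case: (ltnP i.+1 j) => h.
  apply: commrM; first apply: commrM.
  - by apply: Tfar'; lia.
  - by apply: IH; lia.
  - by apply: Tfar'; lia.
have ej : j = i.+1 by lia.
rewrite ej Xp_rec; last by lia.
apply: comm_up2; first by apply: Tbr'; lia.
by apply: TXA; lia.
Qed.
Lemma TX i j : (0 < i < n)%N -> (0 < j <= n)%N -> i <> j -> i.+1 <> j ->
  GRing.comm (T i) (Xp j).
Proof.
move=> hi hj h1 h2; case: (ltnP j i) => h.
  by apply: TXA; lia.
by apply: TXB; lia.
Qed.

Lemma X1Xp j : (1 < j <= n)%N -> GRing.comm X1 (Xp j).
Proof.
elim: j => [|j IH] hj; first by lia.
case: (ltnP 1 j) => h; last first.
  have -> : j = 1 by lia.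
  exact: X1Xp2.
rewrite Xp_rec; last by lia.
apply: commrM; first apply: commrM.
- by apply: X1T; lia.
- by apply: IH; lia.
- by apply: X1T; lia.
Qed.
Lemma U1Xp j : (1 < j <= n)%N -> GRing.comm (U 1) (Xp j).
Proof.
elim: j => [|j IH] hj; first by lia.
case: (ltnP 1 j) => h; last first.
  have -> : j = 1 by lia.
  exact: U1Xp2.
rewrite Xp_rec; last by lia.
apply: commrM; first apply: commrM.
- by apply: U1T; lia.
- by apply: IH; lia.
- by apply: U1T; lia.
Qed.

Lemma XXlt i j : (0 < i)%N -> (i < j)%N -> (j <= n)%N -> GRing.comm (Xp i) (Xp j).
Proof.
elim: i j => [|i IH] j hi hij hjn; first by lia.
case: (posnP i) => h0.
  by subst i; rewrite Xp1; apply: X1Xp; lia.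
rewrite Xp_rec; last by lia.
apply/commr_sym; apply: commrM; first apply: commrM.
- by apply/commr_sym; apply: TXB; lia.
- by apply/commr_sym; apply: IH; lia.
- by apply/commr_sym; apply: TXB; lia.
Qed.
Lemma XX i j : (1 <= i <= n)%N -> (1 <= j <= n)%N -> GRing.comm (Xp i) (Xp j).
Proof.
move=> hi hj; case: (ltngtP i j) => h.
- by apply: XXlt; lia.
- by apply/commr_sym; apply: XXlt; lia.
- by rewrite h.
Qed.

Lemma T0pT j : (1 < j < n)%N -> GRing.comm T0p (T j).
Proof. by move=> hj; apply: commM2; [exact: zPV | exact: U1T]. Qed.
Lemma T0pXp j : (1 < j <= n)%N -> GRing.comm T0p (Xp j).
Proof. by move=> hj; apply: commM2; [exact: zPV | exact: U1Xp]. Qed.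
Lemma T0pTnp : GRing.comm T0p Tnp.
Proof.
apply: commW; first exact: T0pT.
by apply: commM2; [exact: zPV | apply: hUU].
Qed.
Lemma TnpT i : (0 < i < n.-1)%N -> GRing.comm (T i) Tnp.
Proof.
move=> hi; rewrite TnpW; apply: (C1' Tu' Tbr' Tfar'); try lia.
by move=> j hj; apply/commr_sym/hUT; lia.
Qed.
Lemma qbTnp : qb (T (n - 1)) Tnp.
Proof.
rewrite TnpW subn1; apply: qb_sym; apply: (C2' Tu' Tbr' Tfar') => //.
- by apply: comm_qb; apply: hqb.
- by move=> j hj; apply/commr_sym/hUT; lia.
Qed.
Lemma X1Tnp : GRing.comm X1 Tnp.
Proof.
apply: commW; first exact: X1T.
by apply: commM2; apply: hUU.
Qed.
Lemma XpTnp j : (0 < j < n)%N -> GRing.comm (Xp j) Tnp.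
Proof.
move=> hj; apply: commM2; first apply: commM2.
- by apply/commr_sym/comm_dn => k hk; apply/commr_sym; apply: TnpT; lia.
- exact: X1Tnp.
- by apply/commr_sym/comm_up => k hk; apply/commr_sym; apply: TnpT; lia.
Qed.

Local Notation f := (fun h => eval w (psi hn h)).

Lemma sT0 : shT f 0 = T0p.
Proof. by rewrite shT_eq //= inordK. Qed.
Lemma sTi i : (0 < i < n)%N -> shT f i = T i.
Proof.
move=> hi; rewrite shT_eq; last by lia.
rewrite /= inordK; last by lia.
have h0 : (i == 0%N) = false by apply/negbTE; lia.
have h1 : (i < n)%N by lia.
by rewrite /psiT h0 h1 eval_tT.
Qed.
Lemma sTn : shT f n = Tnp.
Proof.
rewrite shT_eq // /= inordK //.
have h0 : (n == 0%N) = false by apply/negbTE; lia.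
by rewrite /psiT h0 ltnn /= eval_Siterm ?eval_Sterm //; exact: Tu'.
Qed.
Lemma sX j : (0 < j <= n)%N -> shX f j = Xp j.
Proof.
move=> hj; rewrite (shX_eq _ (j := oX hn j.-1)); [ | lia | by rewrite val_oX; lia].
rewrite /= val_oX; last by lia.
by rewrite eval_Dterm ?eval_Uterm //; lia.
Qed.
Lemma sP p : shP f p = P p. Proof. by []. Qed.

Lemma T0pinv : q^-1 * T0p^-1 * X1 = U 2.
Proof.
have uq := uP Pq; have u1 := uU1.
rewrite /T0p invrM ?uV // invrK.
by rewrite -!mulrA -(c2 (zP Pq _)) !mulKr.
Qed.

Lemma uT0p' : T0p \is a GRing.unit. Proof. exact: uT0p. Qed.

Lemma s2 : forall i, (i <= n)%N -> shT f i \is a GRing.unit.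
Proof.
move=> i hi; case: (posnP i) => [->|h0]; first by rewrite sT0; exact: uT0p.
case: (ltnP i n) => h1; first by rewrite sTi ?Tu' //; lia.
have -> : i = n by lia.
by rewrite sTn; exact: uTnp.
Qed.
Lemma s3 : forall i, (1 <= i <= n)%N -> shX f i \is a GRing.unit.
Proof. by move=> i hi; rewrite sX ?uXp //; lia. Qed.
Lemma s4 : shT f 0 * shT f 1 * shT f 0 * shT f 1 = shT f 1 * shT f 0 * shT f 1 * shT f 0.
Proof.
rewrite sT0 sTi; last by lia.
by apply: qb_scal; [exact: zPV | apply: comm_qb; apply: hqb].
Qed.
Lemma s5 : forall i j, (1 <= i <= n)%N -> (1 <= j <= n)%N -> GRing.comm (shX f i) (shX f j).
Proof. by move=> i j hi hj; rewrite !sX; [apply: XX | ..]; lia. Qed.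
Lemma s6 : shT f (n - 1) * shT f n * shT f (n - 1) * shT f n =
           shT f n * shT f (n - 1) * shT f n * shT f (n - 1).
Proof. rewrite sTn sTi; [exact: qbTnp | lia]. Qed.
Lemma s7 : forall i, (1 <= i)%N -> (i <= n - 2)%N ->
  shT f i * shT f i.+1 * shT f i = shT f i.+1 * shT f i * shT f i.+1.
Proof. by move=> i h1 h2; rewrite !sTi; [apply: Tbr' | ..]; lia. Qed.
Lemma s8 : forall i j, (i <= n)%N -> (j <= n)%N -> (i.+1 < j)%N -> GRing.comm (shT f i) (shT f j).
Proof.
move=> i j hi hj hij.
case: (ltnP j n) => hjn.
  rewrite (sTi (i := j)); last by lia.
  case: (posnP i) => [->|h0]; first by rewrite sT0; apply: T0pT; lia.
  by rewrite sTi; [apply: Tfar' | ..]; lia.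
have -> : j = n by lia.
rewrite sTn; case: (posnP i) => [->|h0]; first by rewrite sT0; exact: T0pTnp.
by rewrite sTi; [apply: TnpT | ]; lia.
Qed.
Lemma s9 : forall i, (1 <= i <= n - 1)%N -> shT f i - (shT f i)^-1 = shP f Pt - (shP f Pt)^-1.
Proof. by move=> i hi; rewrite sTi; [exact: hTq | lia]. Qed.
Lemma s10 : shT f 0 - (shT f 0)^-1 = shP f Pt0 - (shP f Pt0)^-1.
Proof.
rewrite sT0 sP.
have uq := uP Pq.
have h := hq1; rewrite opprK in h.
have e : U 1 = q * T0p by rewrite /T0p mulVKr.
rewrite e -mulrBr -mulrDr -mulrA -(c2 (zP Pq _)) in h.
apply: diff_of_quad; [exact: uT0p | exact: uP | exact: zP |].
apply: (mulrI uq); apply: (mulrI uq); by rewrite h !mulr0.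
Qed.
Lemma s11 : shT f n - (shT f n)^-1 = shP f Ptn - (shP f Ptn)^-1.
Proof.
rewrite sTn sP /Tnp; apply: conj_diff'; [exact: uS | exact: uU4 | exact: uP | exact: zP |].
apply: diff_of_quad; [exact: uU4 | exact: uP | exact: zP |].
by have := hq4; rewrite opprK.
Qed.
Lemma s12 : forall i j, (i <= n)%N -> (1 <= j <= n)%N ->
  ((i.+1 < j)%N \/ (j.+1 < i)%N \/ (i = n /\ j = (n - 1)%N)) ->
  shT f i * shX f j = shX f j * shT f i.
Proof.
move=> i j hi hj hd; rewrite sX; last by lia.
case: (posnP i) => [e0|h0].
  subst i; rewrite sT0; apply: T0pXp.
  by case: hd => [|[|[]]]; lia.
case: (ltnP i n) => hin.
  rewrite sTi; last by lia.
  by apply: TX; try lia; case: hd => [|[|[]]]; lia.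
have ei : i = n by lia.
subst i; rewrite sTn; apply/commr_sym/XpTnp.
by case: hd => [|[|[]]]; lia.
Qed.
Lemma s13 : forall i, (1 <= i <= n - 1)%N -> shT f i * shX f i = shX f i.+1 * (shT f i)^-1.
Proof.
move=> i hi; rewrite !sX ?sTi; try lia.
by rewrite Xp_rec ?mulrK //; [apply: Tu' | ]; lia.
Qed.
Lemma s14 : (shX f n)^-1 * (shT f n)^-1 - ((shX f n)^-1 * (shT f n)^-1)^-1 =
   shP f Pun - (shP f Pun)^-1.
Proof.
rewrite sX ?sTn ?sP; last by lia.
rewrite U3form; apply: conj_diff'; [exact: uS | exact: uU3 | exact: uP | exact: zP |].
apply: diff_of_quad; [exact: uU3 | exact: uP | exact: zP |].
by have := hq3; rewrite opprK.
Qed.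
Lemma s15 : (shP f Pq)^-1 * (shT f 0)^-1 * shX f 1 -
   ((shP f Pq)^-1 * (shT f 0)^-1 * shX f 1)^-1 = shP f Pu0 - (shP f Pu0)^-1.
Proof.
rewrite sX; last by lia.
rewrite sT0 !sP Xp1 T0pinv.
apply: diff_of_quad; [exact: uU2 | exact: uP | exact: zP |].
by have := hq2; rewrite opprK.
Qed.

Lemma part2 : ShRel f.
Proof.
rewrite /ShRel; cbv beta zeta; split.
- exact: cP.
- exact: s2.
- exact: s3.
- exact: s4.
split.
- exact: s5.
- exact: s6.
- exact: s7.
- exact: s8.
split.
- exact: s9.
- exact: s10.
- exact: s11.
split.
- exact: s12.
- exact: s13.
- exact: s14.
- exact: s15.
Qed.

Lemma upf : up (shT f) 1 (n - 1) = S.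
Proof.
by apply: eq_big_seq => i; rewrite mem_iota => hi; apply: sTi; lia.
Qed.

Lemma comp2 : forall g, phi f g = w g.
Proof.
case=> [p | k | j]; first by [].
- case: k => m hm.
  have -> : Ordinal hm = inord m by apply: val_inj; rewrite /= inordK.
  have uS := uS; have uq := uP Pq.
  case: m hm => [|[|[|[|m]]]] hm //.
  + change (hpU (phi f) 1 = hpU w 1).
    by rewrite hpU_phi1 sT0 /T0p mulVKr.
  + change (hpU (phi f) 2 = hpU w 2).
    rewrite hpU_phi2 sT0 sX; last by lia.
    by rewrite Xp1 T0pinv.
  + change (hpU (phi f) 3 = hpU w 3).
    rewrite hpU_phi3 upf sX ?sTn ?U3form; last by lia.
    by rewrite -!mulrA mulVKr // mulrV // mulr1.
  + change (hpU (phi f) 4 = hpU w 4).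
    rewrite hpU_phi4 upf sTn /Tnp.
    by rewrite -!mulrA mulVKr // mulrV // mulr1.
- case: j => m hm.
  change (shT f m.+1 = w (HpT (Ordinal hm))).
  rewrite sTi; last by lia.
  by apply: hpT_eq.
Qed.
End Part2.

End P3.

Section Comp3.
Variables (n : nat) (hn : (1 < n)%N) (A : unitAlgType C_fieldType) (v : ShGen n -> A).
Hypothesis H : ShRel v.

Lemma upphi : up (hpT (phi v)) 1 (n - 1) = up (shT v) 1 (n - 1).
Proof. by apply: eq_big_seq => i; rewrite mem_iota => hi; apply: hpT_phi; lia. Qed.
Lemma upphi' m : (m < n)%N -> up (hpT (phi v)) 1 m = up (shT v) 1 m.
Proof. by move=> hm; apply: eq_big_seq => i; rewrite mem_iota => hi; apply: hpT_phi; lia. Qed.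
Lemma dnphi' m : (m < n)%N -> dn (hpT (phi v)) 1 m = dn (shT v) 1 m.
Proof. by move=> hm; apply: eq_big_seq => i; rewrite mem_rev mem_iota => hi; apply: hpT_phi; lia. Qed.

Lemma comp3 h : eval (phi v) (psi hn h) = v h.
Proof.
case: h => [p | i | j]; first by [].
- case: i => m hm.
  change (eval (phi v) (psiT hn m) = v (ShT (Ordinal hm))).
  have -> : v (ShT (Ordinal hm)) = shT v m.
    rewrite shT_eq //; congr (v (ShT _)); apply: val_inj; rewrite /= inordK //.
  case: (posnP m) => [e0|h0].
    subst m; rewrite /psiT eqxx /=.
    change ((shP v Pq)^-1 * hpU (phi v) 1 = shT v 0).
    by rewrite hpU_phi1 mulKr //; apply: P1.uP.
  case: (ltnP m n) => hmn.
    have h1 : (m == 0%N) = false by apply/negbTE; lia.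
    by rewrite /psiT h1 hmn eval_tT ?hpT_phi //; lia.
  have em : m = n by lia.
  subst m.
  have h1 : (n == 0%N) = false by apply/negbTE; lia.
  rewrite /psiT h1 ltnn /= eval_Siterm ?eval_Sterm; last first.
    by move=> i hi; rewrite hpT_phi //; apply: P1.Tu => //; lia.
  change ((up (hpT (phi v)) 1 (n - 1))^-1 * hpU (phi v) 4 * up (hpT (phi v)) 1 (n - 1) = shT v n).
  rewrite hpU_phi4 upphi.
  have uS := P1.uS hn H.
  by rewrite -!mulrA mulKr // mulVr // mulr1.
- case: j => m hm.
  change (eval (phi v) (psiX hn m) = v (ShX (Ordinal hm))).
  rewrite /psiX /= eval_Dterm // eval_Uterm //.
  change (dn (hpT (phi v)) 1 m * (hpU (phi v) 1 * hpU (phi v) 2) * up (hpT (phi v)) 1 m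
          = v (ShX (Ordinal hm))).
  rewrite dnphi' // upphi' // P1.U12 // -P1.Xform //.
  by rewrite (shX_eq _ (j := Ordinal hm)).
Qed.
End Comp3.

Theorem proposition3p5 (n : nat) (hn : (2 <= n)%N) :
  (forall (A : unitAlgType C_fieldType) (v : ShGen n -> A),
      ShRel v -> HpRel (phi v)) /\
  exists psi : ShGen n -> term (HpGen n),
    [/\ forall (A : unitAlgType C_fieldType) (w : HpGen n -> A),
          HpRel w -> ShRel (fun h => eval w (psi h)),
        forall (A : unitAlgType C_fieldType) (w : HpGen n -> A),
          HpRel w -> forall g, phi (fun h => eval w (psi h)) g = w g &
        forall (A : unitAlgType C_fieldType) (v : ShGen n -> A),
          ShRel v -> forall h, eval (phi v) (psi h) = v h].
Proof.
split; first by move=> A v H; apply: P1.part1.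
exists (psi hn); split.
- by move=> A w Hw; apply: P3.part2.
- by move=> A w Hw; apply: P3.comp2.
- by move=> A v H h; apply: comp3.
Qed.
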